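(* Let $h\ge1$ be real. There is a unique sequence of positive real numbers $(r_n)_{n\ge1}$ satisfying $$r_n=hn-1+\frac{n^2}{r_{n+1}}\qquad\text{for all } n\ge1.$$ Moreover, this sequence satisfies, for all $n\ge1$, $$0<r_n-\alpha n+c<\frac{(\alpha-c)(c-1)}{\alpha n},$$ where $\alpha=\dfrac{h+\sqrt{h^2+4}}{2}$ and $c=\dfrac{1+\alpha}{2\alpha-h}=\dfrac12+\dfrac{h+2}{2\sqrt{h^2+4}}$. *)

(* Defs.v *)
From Stdlib Require Import Reals.
Open Scope R_scope.

(* A sequence (r_n)_{n>=1} is represented by r : nat -> R; only indices n >= 1 matter. *)
Definition good_seq (h : R) (r : nat -> R) : Prop :=
  forall n : nat, (1 <= n)%nat ->
    0 < r n /\ r n = h * INR n - 1 + (INR n)^2 / r (S n).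

Definition alpha (h : R) : R := (h + sqrt (h^2 + 4)) / 2.
Definition cst (h : R) : R := (1 + alpha h) / (2 * alpha h - h).

(* Main.v *)
Require Import Defs.
From Stdlib Require Import Reals Lra Lia Psatz.
Open Scope R_scope.

Definition cc (a:R) := a*(a+1)/(a^2+1).
Definition L a n := a * INR n - cc a.
Definition W a n := (a - cc a)*(cc a - 1)/(a*INR n).
Definition U a n := L a n + W a n.
Definition T h n y := h*INR n - 1 + (INR n)^2 / y.
Definition EE a := (a - cc a)*(cc a - 1)/a.

Lemma bb_eq a : 1 < a -> a - cc a = a^2*(a-1)/(a^2+1).
Proof. intros. unfold cc. field. nra. Qed.
Lemma cc1 a : 1 < a -> cc a - 1 = (a - cc a)/a^2.
Proof. intros. rewrite bb_eq by lra. unfold cc. field. nra. Qed.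
Lemma bb_pos a : 1 < a -> 0 < a - cc a.
Proof. intros. rewrite bb_eq by lra. apply Rdiv_lt_0_compat. apply Rmult_lt_0_compat; nra. nra. Qed.
Lemma cc1_pos a : 1 < a -> 0 < cc a - 1.
Proof. intros. rewrite cc1 by lra. apply Rdiv_lt_0_compat. apply bb_pos; lra. nra. Qed.

Lemma L_ge a n : 1 < a -> a * INR n + (a - cc a) <= L a (S n).
Proof. intros. unfold L. rewrite S_INR. lra. Qed.

Lemma L_pos a n : 1 < a -> (1 <= n)%nat -> 0 < L a n.
Proof. intros. unfold L. pose proof (bb_pos a H). apply le_INR in H0. simpl in H0. nra. Qed.

Lemma W_pos a n : 1 < a -> (1 <= n)%nat -> 0 < W a n.
Proof. intros. unfold W. apply le_INR in H0. simpl in H0.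
 pose proof (bb_pos a H). pose proof (cc1_pos a H). apply Rdiv_lt_0_compat; nra. Qed.

Lemma W_le a n : 1 < a -> (1 <= n)%nat -> W a n <= EE a.
Proof. intros. unfold W, EE. apply le_INR in H0. simpl in H0.
 pose proof (bb_pos a H). pose proof (cc1_pos a H).
 unfold Rdiv. apply Rmult_le_compat_l. nra.
 apply Rinv_le_contravar; nra. Qed.

Lemma Tmap_hi a h n y : 1 < a -> h = a - /a -> (1 <= n)%nat ->
  L a (S n) <= y -> T h n y < U a n.
Proof.
 intros Ha Hh Hn Hy. pose proof (L_ge a n Ha). pose proof (bb_pos a Ha) as Hb.
 apply le_INR in Hn. simpl in Hn. set (x := INR n) in *.
 set (b := a - cc a) in *.
 assert (Hyp : a*x + b <= y) by lra.
 assert (E1: x^2 / y <= x^2/(a*x+b)).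
 { unfold Rdiv. apply Rmult_le_compat_l. nra. apply Rinv_le_contravar; nra. }
 assert (E2: h*x - 1 + x^2/(a*x+b) = a*x - cc a + b^2/(a^2*(a*x+b))).
 { assert (F1: x^2/(a*x+b) - b^2/(a^2*(a*x+b)) = (a*x - b)/a^2) by (field; repeat split; nra).
   assert (F2: b + b/a^2 = a - 1) by (unfold b; rewrite bb_eq by lra; field; nra).
   assert (F3: (a*x-b)/a^2 = x/a - b/a^2) by (field; repeat split; nra).
   assert (F4: h*x = a*x - x/a) by (subst h; field; nra).
   assert (cc a = a - b) by (unfold b; ring). lra. }
 unfold T, U, L, W. fold x. fold b. rewrite cc1 by lra. fold b.
 assert (E3: b^2/(a^2*(a*x+b)) < b * (b/a^2) / (a*x)).
 { replace (b*(b/a^2)/(a*x)) with (b^2/(a^2*(a*x))) by (field; repeat split; nra).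
   assert (0 < a^2) by nra. assert (0 < a*x) by nra.
   unfold Rdiv. apply Rmult_lt_compat_l. nra. apply Rinv_lt_contravar.
   apply Rmult_lt_0_compat; apply Rmult_lt_0_compat; nra. apply Rmult_lt_compat_l; lra. }
 lra.
Qed.

Lemma Tmap_lo a h n y : 1 < a -> h = a - /a -> (1 <= n)%nat ->
  L a (S n) <= y -> y <= U a (S n) -> L a n < T h n y.
Proof.
 intros Ha Hh Hn Hy1 Hy2. pose proof (L_ge a n Ha). pose proof (bb_pos a Ha) as Hb.
 apply le_INR in Hn. simpl in Hn.
 unfold U, W in Hy2. rewrite S_INR in Hy2.
 unfold T, L. set (x := INR n) in *. set (b := a - cc a) in *.
 assert (Hc1 : cc a - 1 = b/a^2) by (unfold b; apply cc1; lra).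
 assert (F4: h*x = a*x - x/a) by (subst h; field; nra).
 assert (Hy0: 0 < y) by nra.
 set (D := x/a - b/a^2).
 assert (Goal: D < x^2/y).
 2:{ assert (cc a = a - b) by (unfold b; ring). unfold D in Goal. lra. }
 destruct (Rle_or_lt D 0) as [HD|HD].
 { assert (0 < x^2/y) by (apply Rdiv_lt_0_compat; nra). lra. }
 set (W' := b * (cc a - 1) / (a * (x+1))) in *.
 assert (HW: W' = b^2/(a^3*(x+1))) by (unfold W'; rewrite Hc1; field; repeat split; nra).
 set (U' := L a (S n) + W') in *.
 assert (HU: U' = a*x + b + W') by (unfold U', L; rewrite S_INR; fold x; unfold b; ring).
 assert (0 < a^3) by (apply pow_lt; lra).
 assert (HW0: 0 < W') by (rewrite HW; apply Rdiv_lt_0_compat; [nra| apply Rmult_lt_0_compat; lra]).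
 assert (E1: D*(a*x+b) = x^2 - b^2/a^2) by (unfold D; field; nra).
 assert (E2: D*W' = (b^2/a^2) * (D/(a*(x+1)))) by (rewrite HW; field; repeat split; nra).
 assert (E3: D/(a*(x+1)) < 1).
 { apply (Rmult_lt_reg_r (a*(x+1))). nra. unfold Rdiv. rewrite Rmult_assoc, Rinv_l by nra.
   unfold D. assert (x/a <= a*x). { apply (Rmult_le_reg_r a). lra. unfold Rdiv. rewrite Rmult_assoc, Rinv_l by lra. assert (1 < a*a) by nra. replace (a*x*a) with (x*(a*a)) by ring. nra. }
   assert (0 <= b/a^2) by (apply Rlt_le, Rdiv_lt_0_compat; nra). nra. }
 assert (0 < b^2/a^2) by (apply Rdiv_lt_0_compat; nra).
 assert (E4: D*U' < x^2) by (rewrite HU; nra).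
 assert (E5: x^2/U' <= x^2/y).
 { unfold Rdiv. apply Rmult_le_compat_l. nra. apply Rinv_le_contravar; nra. }
 assert (D < x^2/U'). { apply (Rmult_lt_reg_r U'). nra. unfold Rdiv. rewrite Rmult_assoc, Rinv_l by nra. lra. }
 lra.
Qed.

Lemma Tcontr a h n y z : 1 < a -> L a (S n) <= y -> L a (S n) <= z ->
  Rabs (T h n y - T h n z) <= /a^2 * Rabs (y - z).
Proof.
 intros Ha Hy Hz. pose proof (L_ge a n Ha). pose proof (bb_pos a Ha) as Hb.
 pose proof (pos_INR n). unfold T. set (x := INR n) in *.
 assert (0 < y) by nra. assert (0 < z) by nra.
 replace (h * x - 1 + x ^ 2 / y - (h * x - 1 + x ^ 2 / z)) with ((x^2/(y*z)) * (z - y)) by (field; lra).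
 rewrite Rabs_mult, (Rabs_minus_sym z y). rewrite (Rabs_right (x^2/(y*z))).
 2:{ apply Rle_ge. apply Rmult_le_pos. nra. left. apply Rinv_0_lt_compat. nra. }
 apply Rmult_le_compat_r. apply Rabs_pos.
 assert (Hyz: a^2*x^2 <= y*z).
 { assert (0 <= a*x) by nra. replace (a^2*x^2) with ((a*x)*(a*x)) by ring.
   apply Rmult_le_compat; lra. }
 apply (Rmult_le_reg_r (y*z)). nra. unfold Rdiv. rewrite Rmult_assoc, Rinv_l by nra.
 assert (0 < /a^2) by (apply Rinv_0_lt_compat; nra).
 apply Rle_trans with (/a^2 * (a^2*x^2)). right. field. nra.
 apply Rmult_le_compat_l; lra.
Qed.

Fixpoint Rk a h k n : R := match k with O => L a n | S k => T h n (Rk a h k (S n)) end.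

Lemma inJ a h k n : 1 < a -> h = a - /a -> (1 <= n)%nat -> L a n <= Rk a h k n <= U a n.
Proof.
 intros Ha Hh. revert n. induction k as [|k IH]; intros n Hn; simpl.
 - unfold U. pose proof (W_pos a n Ha Hn). lra.
 - destruct (IH (S n)) as [H1 H2]. lia.
   split; [apply Rlt_le, (Tmap_lo a h n); auto | apply Rlt_le, (Tmap_hi a h n); auto].
Qed.

Lemma diffR a h k j n : 1 < a -> h = a - /a -> (1 <= n)%nat ->
  Rabs (Rk a h (k + j) n - Rk a h k n) <= (/a^2)^k * EE a.
Proof.
 intros Ha Hh. revert n. induction k as [|k IH]; intros n Hn.
 - simpl. destruct (inJ a h j n Ha Hh Hn). pose proof (W_le a n Ha Hn). unfold U in *.
   rewrite Rabs_right by lra. lra.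
 - simpl (S k + j)%nat. simpl Rk.
   destruct (inJ a h (k+j) (S n) Ha Hh ltac:(lia)). destruct (inJ a h k (S n) Ha Hh ltac:(lia)).
   eapply Rle_trans. apply Tcontr; eauto.
   rewrite <- (tech_pow_Rmult (/a^2) k). rewrite Rmult_assoc. apply Rmult_le_compat_l.
   left; apply Rinv_0_lt_compat; nra. apply IH; lia.
Qed.

Lemma decay q K x : 0 <= q < 1 -> 0 < K -> (forall k, x <= K * q^k) -> x <= 0.
Proof.
 intros Hq HK H. destruct (Rle_or_lt x 0) as [|Hx]; auto.
 destruct (pow_lt_1_zero q ltac:(rewrite Rabs_right; lra) (x/K) ltac:(apply Rdiv_lt_0_compat; lra)) as [N HN].
 specialize (HN N (Nat.le_refl _)). specialize (H N). rewrite Rabs_right in HN by (apply Rle_ge, pow_le; lra).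
 assert (K * q^N < K * (x/K)) by (apply Rmult_lt_compat_l; lra).
 replace (K*(x/K)) with x in H0 by (field; lra). lra.
Qed.

Lemma EE_pos a : 1 < a -> 0 < EE a.
Proof. intros. unfold EE. pose proof (bb_pos a H). pose proof (cc1_pos a H).
 apply Rdiv_lt_0_compat; nra. Qed.

Lemma q_range a : 1 < a -> 0 <= /a^2 < 1.
Proof. intros. split. left; apply Rinv_0_lt_compat; nra.
 rewrite <- Rinv_1. apply Rinv_lt_contravar; nra. Qed.

Lemma cauchyR a h n : 1 < a -> h = a - /a -> Cauchy_crit (fun k => Rk a h k n).
Proof.
 intros Ha Hh eps Heps. destruct n as [|n].
 - exists 1%nat. intros k m Hk Hm. destruct k as [|k]; [lia|]. destruct m as [|m]; [lia|].
   simpl. unfold T, Rdist. simpl. replace (0^2) with 0 by ring.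
   unfold Rdiv. rewrite !Rmult_0_l, !Rmult_0_r. rewrite Rminus_diag, Rabs_R0. lra.
 - pose proof (EE_pos a Ha). pose proof (q_range a Ha).
   destruct (pow_lt_1_zero (/a^2) ltac:(rewrite Rabs_right; lra) (eps/EE a) ltac:(apply Rdiv_lt_0_compat; lra)) as [N HN].
   exists N. intros k m Hk Hm. unfold Rdist.
   assert (G: forall k m, (k >= N)%nat -> (k <= m)%nat -> Rabs (Rk a h m (S n) - Rk a h k (S n)) < eps).
   { intros k0 m0 Hk0 Hkm. replace m0 with (k0 + (m0 - k0))%nat by lia.
     eapply Rle_lt_trans. apply diffR; auto; lia.
     specialize (HN k0 Hk0). rewrite Rabs_right in HN by (apply Rle_ge, pow_le; lra).
     apply (Rmult_lt_compat_r (EE a)) in HN; auto. unfold Rdiv in HN.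
     rewrite Rmult_assoc, Rinv_l, Rmult_1_r in HN by lra. lra. }
   destruct (Nat.le_ge_cases k m).
   + rewrite Rabs_minus_sym. apply G; lia.
   + apply G; lia.
Qed.

Lemma le_eps x B : (forall eps, 0 < eps -> x < B + eps) -> x <= B.
Proof. intros H. destruct (Rle_or_lt x B); auto. specialize (H (x - B) ltac:(lra)). lra. Qed.

Lemma lim_bound a h n l : 1 < a -> h = a - /a -> (1 <= n)%nat ->
  Un_cv (fun k => Rk a h k n) l -> forall k, Rabs (l - Rk a h k n) <= (/a^2)^k * EE a.
Proof.
 intros Ha Hh Hn Hl k. apply le_eps. intros eps He.
 destruct (Hl eps He) as [N HN]. specialize (HN (k + N)%nat ltac:(lia)). unfold Rdist in HN.
 pose proof (diffR a h k N n Ha Hh Hn).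
 pose proof (Rabs_triang (l - Rk a h (k+N) n) (Rk a h (k+N) n - Rk a h k n)).
 replace (l - Rk a h (k + N) n + (Rk a h (k + N) n - Rk a h k n)) with (l - Rk a h k n) in H0 by ring.
 rewrite Rabs_minus_sym in HN. lra.
Qed.


Lemma props a h (l : nat -> R) : 1 < a -> h = a - /a ->
  (forall n, (1 <= n)%nat -> forall k, Rabs (l n - Rk a h k n) <= (/a^2)^k * EE a) ->
  forall n, (1 <= n)%nat -> L a n <= l n <= U a n /\ l n = T h n (l (S n)).
Proof.
 intros Ha Hh Hl.
 pose proof (EE_pos a Ha). pose proof (q_range a Ha).
 assert (HJ: forall n, (1 <= n)%nat -> L a n <= l n <= U a n).
 { intros n Hn. split.
   - assert (L a n - l n <= 0); [|lra]. apply (decay (/a^2) (EE a)); auto. intros k.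
     destruct (inJ a h k n Ha Hh Hn). specialize (Hl n Hn k).
     pose proof (Rle_abs (Rk a h k n - l n)). rewrite Rabs_minus_sym in Hl. lra.
   - assert (l n - U a n <= 0); [|lra]. apply (decay (/a^2) (EE a)); auto. intros k.
     destruct (inJ a h k n Ha Hh Hn). specialize (Hl n Hn k).
     pose proof (Rle_abs (l n - Rk a h k n)). lra. }
 intros n Hn. split; auto.
 assert (Rabs (l n - T h n (l (S n))) <= 0); [| pose proof (Rle_abs (l n - T h n (l (S n)))); pose proof (Rle_abs (-(l n - T h n (l (S n)))));
   rewrite Rabs_Ropp in H3; lra ].
 apply (decay (/a^2) (2 * EE a)); auto; try lra. intros k.
 pose proof (Hl n Hn (S k)). simpl Rk in H1.
 destruct (HJ (S n) ltac:(lia)). destruct (inJ a h k (S n) Ha Hh ltac:(lia)).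
 pose proof (Tcontr a h n (Rk a h k (S n)) (l (S n)) Ha H4 H2).
 pose proof (Hl (S n) ltac:(lia) k). rewrite Rabs_minus_sym in H7.
 pose proof (Rabs_triang (l n - T h n (Rk a h k (S n))) (T h n (Rk a h k (S n)) - T h n (l (S n)))).
 replace (l n - T h n (Rk a h k (S n)) + (T h n (Rk a h k (S n)) - T h n (l (S n)))) with (l n - T h n (l (S n))) in H8 by ring.
 assert (Hp: 0 <= (/a^2)^k) by (apply pow_le; lra).
 change ((/a^2)^(S k)) with (/a^2 * (/a^2)^k) in H1.
 assert (/a^2 * ((/a^2)^k * EE a) <= (/a^2)^k * EE a).
 { rewrite <- (Rmult_1_l ((/a^2)^k * EE a)) at 2. apply Rmult_le_compat_r. apply Rmult_le_pos; lra. lra. }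
 assert (/a^2 * (/a^2)^k * EE a <= (/a^2)^k * EE a) by (rewrite Rmult_assoc; lra).
 assert (/a^2 * Rabs (Rk a h k (S n) - l (S n)) <= /a^2 * ((/a^2)^k * EE a)) by (apply Rmult_le_compat_l; lra).
 lra.
Qed.

Lemma bern t k : 0 <= t -> 1 + INR k * t <= (1+t)^k.
Proof. intros Ht. induction k as [|k IH]. simpl. lra.
 rewrite S_INR. simpl. assert (0 <= INR k) by apply pos_INR. nra. Qed.

Lemma uniq a h (r r' : nat -> R) : 1 < a -> h = a - /a -> 1 <= h ->
  (forall n, (1 <= n)%nat -> L a n <= r n <= U a n /\ r n = T h n (r (S n))) ->
  good_seq h r' -> forall n, (1 <= n)%nat -> r' n = r n.
Proof.
 intros Ha Hh H1h Hr Hr'.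
 pose proof (EE_pos a Ha) as HE. pose proof (bb_pos a Ha) as Hb. pose proof (cc1_pos a Ha) as Hc.
 assert (P1: forall n, INR n < r' (S n)).
 { intros n. destruct (Hr' (S n) ltac:(lia)) as [_ Heq].
   destruct (Hr' (S (S n)) ltac:(lia)) as [Hpos _].
   rewrite S_INR in Heq. pose proof (pos_INR n).
   assert (0 < (INR n + 1)^2 / r' (S (S n))) by (apply Rdiv_lt_0_compat; nra). nra. }
 assert (P2: forall n, (1 <= n)%nat -> 0 < r' n <= (h+1) * INR n).
 { intros n Hn. destruct (Hr' n Hn) as [Hp Heq]. split; auto.
   pose proof (P1 n). apply le_INR in Hn. simpl in Hn.
   assert (INR n ^2 / r' (S n) <= INR n ^ 2 / INR n).
   { unfold Rdiv. apply Rmult_le_compat_l. nra. apply Rinv_le_contravar; lra. }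
   replace (INR n ^2 / INR n) with (INR n) in H0 by (field; lra). rewrite Heq. lra. }
 assert (P3: forall n, (1 <= n)%nat -> 0 < r n <= (a + EE a) * INR n).
 { intros n Hn. destruct (Hr n Hn) as [[H1 H2] _]. pose proof (L_pos a n Ha Hn).
   pose proof (W_le a n Ha Hn). unfold U, L in *. apply le_INR in Hn. simpl in Hn.
   assert (0 < cc a) by lra. nra. }
 set (d := fun n => r' n - r n).
 set (K := h + 1 + a + EE a).
 assert (P4: forall n, (1 <= n)%nat -> Rabs (d n) <= K * INR n).
 { intros n Hn. destruct (P2 n Hn). destruct (P3 n Hn). unfold d, K.
   apply Rabs_le. split; nra. }
 assert (P5: forall n, (1 <= n)%nat -> Rabs (d n) * a <= Rabs (d (S n))).
 { intros n Hn. destruct (Hr' n Hn) as [_ E1]. destruct (Hr n Hn) as [_ E2].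
   destruct (Hr (S n) ltac:(lia)) as [[H3 _] _]. pose proof (L_ge a n Ha).
   pose proof (P1 n). apply le_INR in Hn. simpl in Hn. unfold T in E2.
   set (x := INR n) in *. set (y := r' (S n)) in *. set (z := r (S n)) in *.
   assert (Hd: d n = x^2 * (z - y) / (y*z)).
   { unfold d. rewrite E1, E2. fold x y z. field. split; nra. }
   assert (Hd': d (S n) = - (z - y)) by (unfold d; fold y z; ring).
   rewrite Hd', Rabs_Ropp, Hd.
   assert (0 < a*x) by nra. assert (0 < y*z) by (apply Rmult_lt_0_compat; lra).
   unfold Rdiv. rewrite !Rabs_mult. rewrite (Rabs_right (x^2)) by nra.
   rewrite (Rabs_right (/(y*z))) by (left; apply Rinv_0_lt_compat; lra).
   assert (a * x^2 <= y*z) by (assert (a*x <= z) by nra; nra).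
   assert (Q: x^2 * /(y*z) * a <= 1).
   { apply (Rmult_le_reg_r (y*z)). lra. replace (x^2 * /(y*z) * a * (y*z)) with (a*x^2) by (field; lra). lra. }
   pose proof (Rabs_pos (z-y)). nra. }
 assert (P6: forall k n, (1 <= n)%nat -> Rabs (d n) * a^k <= Rabs (d (n + k)%nat)).
 { induction k as [|k IH]; intros n Hn.
   - simpl. rewrite Nat.add_0_r. lra.
   - replace (n + S k)%nat with (S n + k)%nat by lia.
     eapply Rle_trans; [|apply IH; lia]. simpl pow.
     pose proof (P5 n Hn). assert (0 <= a^k) by (apply pow_le; lra).
     replace (Rabs (d n) * (a * a^k)) with (Rabs (d n) * a * a^k) by ring.
     apply Rmult_le_compat_r; auto. }
 intros n Hn.
 set (s := sqrt a). assert (Hs: s * s = a) by (apply sqrt_sqrt; lra).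
 assert (Hs1: 1 < s). { assert (0 <= s) by apply sqrt_pos. nra. }
 set (m := Rmin 1 (s - 1)). assert (Hm: 0 < m) by (unfold m; apply Rmin_glb_lt; lra).
 assert (Hm1: m <= 1) by apply Rmin_l. assert (Hm2: m <= s - 1) by apply Rmin_r.
 assert (HnR: 1 <= INR n) by (apply le_INR in Hn; simpl in Hn; lra).
 assert (HK: 0 < K) by (unfold K; lra).
 assert (Rabs (d n) <= 0).
 2:{ assert (Hd0: d n = 0). { pose proof (Rle_abs (d n)) as Q1. pose proof (Rle_abs (- d n)) as Q2. rewrite Rabs_Ropp in Q2. lra. }
     unfold d in Hd0. lra. }
 apply (decay (/s) (K * INR n / m)).
 { split. left; apply Rinv_0_lt_compat; lra. rewrite <- Rinv_1. apply Rinv_lt_contravar; lra. }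
 { apply Rdiv_lt_0_compat; nra. }
 intros k.
 pose proof (P6 k n Hn). pose proof (P4 (n+k)%nat ltac:(lia)). rewrite plus_INR in H0.
 pose proof (bern (s-1) k ltac:(lra)). replace (1 + (s-1)) with s in H1 by ring.
 assert (Hsk: 0 < s^k) by (apply pow_lt; lra).
 assert (Hak: a^k = s^k * s^k) by (rewrite <- Hs; apply Rpow_mult_distr).
 pose proof (pos_INR k).
 assert (B1: m * (1 + INR k) <= s^k) by nra.
 assert (B2: INR n + INR k <= INR n * (1 + INR k)) by nra.
 assert (B3: Rabs (d n) * (m * (1 + INR k)) * s^k <= K * INR n * (1 + INR k)).
 { pose proof (Rabs_pos (d n)).
   assert (m * (1 + INR k) * s^k <= s^k * s^k) by (apply Rmult_le_compat_r; lra).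
   assert (Rabs (d n) * (m * (1 + INR k)) * s^k <= Rabs (d n) * a^k).
   { rewrite Hak, Rmult_assoc. apply Rmult_le_compat_l; lra. }
   nra. }
 assert (B4: Rabs (d n) * m * s^k <= K * INR n) by nra.
 rewrite <- Rinv_pow by lra.
 apply (Rmult_le_reg_r (m * s^k)). nra.
 replace (K * INR n / m * / s ^ k * (m * s ^ k)) with (K * INR n) by (field; lra). lra.
Qed.

Theorem lemma3 (h : R) (hh : 1 <= h) :
  exists r : nat -> R,
    good_seq h r /\
    (forall r' : nat -> R, good_seq h r' ->
       forall n : nat, (1 <= n)%nat -> r' n = r n) /\
    (forall n : nat, (1 <= n)%nat ->
       0 < r n - alpha h * INR n + cst h /\
       r n - alpha h * INR n + cst h
         < (alpha h - cst h) * (cst h - 1) / (alpha h * INR n)).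
Proof.
 assert (Hs2: sqrt (h^2+4) * sqrt (h^2+4) = h^2+4) by (apply sqrt_sqrt; nra).
 assert (Hs0: 0 <= sqrt (h^2+4)) by apply sqrt_pos.
 assert (Hsh: h < sqrt (h^2+4)) by nra.
 assert (Ha: 1 < alpha h) by (unfold alpha; lra).
 assert (Haa: alpha h * alpha h = h * alpha h + 1) by (unfold alpha; nra).
 assert (Hh: h = alpha h - / alpha h).
 { apply (Rmult_eq_reg_r (alpha h)); [|lra]. rewrite Rmult_minus_distr_r, Rinv_l by lra. lra. }
 assert (Hc: cst h = cc (alpha h)).
 { unfold cst, cc. assert (alpha h ^ 2 + 1 = alpha h * (2 * alpha h - h)) by nra.
   assert (2*alpha h - h > 0) by (unfold alpha; lra). rewrite H. field. repeat split; lra. }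
 rewrite Hc. set (a := alpha h) in *. clearbody a.
 set (r := fun n => proj1_sig (R_complete _ (cauchyR a h n Ha Hh))).
 assert (Hlim: forall n, (1 <= n)%nat -> forall k, Rabs (r n - Rk a h k n) <= (/a^2)^k * EE a).
 { intros n Hn. apply lim_bound; auto. unfold r. apply (proj2_sig (R_complete _ (cauchyR a h n Ha Hh))). }
 pose proof (props a h r Ha Hh Hlim) as P.
 exists r. split; [|split].
 - intros n Hn. destruct (P n Hn) as [[H1 _] H2]. split; auto. pose proof (L_pos a n Ha Hn). lra.
 - intros r' Hr'. apply (uniq a h r r'); auto.
 - intros n Hn. destruct (P n Hn) as [_ H2]. destruct (P (S n) ltac:(lia)) as [[H3 H4] _].
   pose proof (Tmap_lo a h n (r (S n)) Ha Hh Hn H3 H4).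
   pose proof (Tmap_hi a h n (r (S n)) Ha Hh Hn H3).
   rewrite <- H2 in H, H0. unfold U, L, W in *. split; lra.
Qed.
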